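(* Let $G$ be a strongly connected digraph. The set-valued map $f_{\mathrm{imcor}}$ is closed on $\operatorname{Adj}(G)$: for every $D\in\operatorname{Adj}(G)$ and all sequences $(D_k)$, $(C_k)$ in $\operatorname{Adj}(G)$ with $D_k\to D$, $C_k\to C$ and $C_k\in f_{\mathrm{imcor}}(D_k)$ for all $k$, we have $C\in f_{\mathrm{imcor}}(D)$.
   Context: A digraph $G=(V,E)$, $V=\{v_1,\dots,v_n\}$, $E\subseteq V\times V$; strongly connected means a directed path exists between every ordered pair of distinct vertices. $\operatorname{Adj}(G)$ is the set of $A=(a_{ij})\in\mathbb{R}^{n\times n}_{\geq0}$ with $a_{ij}>0$ iff $(v_i,v_j)\in E$. Imbalance: $\omega(v_i)=\sum_j a_{ji}-\sum_j a_{ij}$. For $A\in\operatorname{Adj}(G)$, $a_i^*=\min\{a_{ik}:k\neq i,\ a_{ik}\neq0\}$ and $J_i^*=\{j\neq i: a_{ij}=a_i^*\}$. $f_{\mathrm{imcor}}(A)$ is the set of $B\in\operatorname{Adj}(G)$ such that for each $i$ there is $j_i^*\in J_i^*$ with $b_{ij}=a_{ij}+\omega(v_i)$ if $\omega(v_i)>0$ and $j=j_i^*$, and $b_{ij}=a_{ij}$ otherwise (imbalances computed w.r.t. $A$). *)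

(* Defs.v *)
From HB Require Import structures.
From mathcomp Require Import all_boot all_order all_algebra.
From mathcomp Require Import all_classical all_reals all_analysis.
Set Implicit Arguments. Unset Strict Implicit. Unset Printing Implicit Defensive.
Import Order.TTheory GRing.Theory Num.Theory.
Local Open Scope ring_scope.

Definition strongly_connected (n : nat) (E : rel 'I_n) : Prop :=
  forall i j : 'I_n, i != j -> connect E i j.

Definition inAdj (R : realType) (n : nat) (E : rel 'I_n) (A : 'M[R]_n) : Prop :=
  forall i j : 'I_n, 0 <= A i j /\ (0 < A i j <-> E i j).

Definition imbalance (R : realType) (n : nat) (A : 'M[R]_n) (i : 'I_n) : R :=
  \sum_(j < n) A j i - \sum_(j < n) A i j.

(* J_i^* = { j <> i : a_ij = a_i^* }, where a_i^* = min { a_ik : k <> i, a_ik <> 0 }.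
   j is in J_i^* iff a_ij belongs to that set and is <= all its elements. *)
Definition inJstar (R : realType) (n : nat) (A : 'M[R]_n) (i j : 'I_n) : Prop :=
  [/\ j != i, A i j != 0 &
      forall k : 'I_n, k != i -> A i k != 0 -> A i j <= A i k].

Definition in_fimcor (R : realType) (n : nat) (E : rel 'I_n)
    (A B : 'M[R]_n) : Prop :=
  inAdj E B /\
  forall i : 'I_n, exists2 js : 'I_n, inJstar A i js &
    forall j : 'I_n,
      B i j = if (0 < imbalance A i) && (j == js)
              then A i j + imbalance A i else A i j.

(* Main.v *)
Require Import Defs.
From HB Require Import structures.
From mathcomp Require Import all_boot all_order all_algebra.
From mathcomp Require Import all_classical all_reals all_analysis.
From mathcomp Require Import lra.
Import Order.TTheory GRing.Theory Num.Theory.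
Import numFieldTopology.Exports numFieldNormedType.Exports.
Local Open Scope classical_set_scope.
Local Open Scope ring_scope.

Definition freq (P : nat -> Prop) := forall N, exists2 k, (N <= k)%N & P k.

Lemma ev_ex (P : nat -> Prop) : (\forall k \near \oo, P k) -> exists N, forall k, (N <= k)%N -> P k.
Proof. by case=> N _ HN; exists N => k Hk; apply: HN. Qed.

Lemma freq_le (R : realType) (u v : nat -> R) (a b : R) :
  u @ \oo --> a -> v @ \oo --> b -> freq (fun k => u k <= v k) -> a <= b.
Proof.
move=> ua vb Hf; rewrite leNgt; apply/negP => ba.
have m1 : (a + b) / 2 < a by lra.
have m2 : b < (a + b) / 2 by lra.
have h1 := cvgr_gt a ua _ m1.
have h2 := cvgr_lt b vb _ m2.
have [N1 H1] := ev_ex _ (h1 ltac:(apply: filter_class)).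
have [N2 H2] := ev_ex _ (h2 ltac:(apply: filter_class)).
have [k Nk Hk] := Hf (maxn N1 N2).
have k1 : (N1 <= k)%N by apply: leq_trans Nk; apply: leq_maxl.
have k2 : (N2 <= k)%N by apply: leq_trans Nk; apply: leq_maxr.
have := H1 k k1; have := H2 k k2; lra.
Qed.

Arguments freq_le {R u v a b}.

Lemma entry_cvg (R : realType) n (Dk : nat -> 'M[R]_n) (D : 'M[R]_n) i j :
  Dk @ \oo --> D -> (fun k => Dk k i j) @ \oo --> D i j.
Proof. move=> H. exact: (cvg_comp _ _ H (@coord_continuous R n n i j D)). Qed.

Lemma sum_cvg (R : realType) (I : Type) (r : seq I) (f : I -> nat -> R) (a : I -> R) :
  (forall i, f i @ \oo --> a i) -> (fun k => \sum_(i <- r) f i k) @ \oo --> \sum_(i <- r) a i.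
Proof.
move=> H; elim: r => [|x r IH].
  rewrite big_nil; under eq_cvg do rewrite big_nil; exact: cvg_cst.
rewrite big_cons; under eq_cvg do rewrite big_cons; exact: cvgD.
Qed.

Lemma freq_mono (P Q : nat -> Prop) : (forall k, P k -> Q k) -> freq P -> freq Q.
Proof. by move=> PQ HP N; have [k Nk Pk] := HP N; exists k => //; apply: PQ. Qed.

Lemma freq_eq (R : realType) (u v : nat -> R) (a b : R) :
  u @ \oo --> a -> v @ \oo --> b -> freq (fun k => u k = v k) -> a = b.
Proof.
move=> ua vb Hf; apply/eqP; rewrite eq_le; apply/andP; split.
  by apply: (freq_le ua vb); apply: freq_mono Hf => k ->.
by apply: (freq_le vb ua); apply: freq_mono Hf => k ->.
Qed.

Arguments freq_eq {R u v a b}.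

Lemma freq_ev (P Q : nat -> Prop) : freq P -> (exists N, forall k, (N <= k)%N -> Q k) ->
  freq (fun k => P k /\ Q k).
Proof.
move=> HP [M HM] N; have [k Nk Pk] := HP (maxn N M); exists k.
  by apply: leq_trans Nk; apply: leq_maxl.
split=> //; apply: HM; apply: leq_trans Nk; apply: leq_maxr.
Qed.

Lemma freq_all (P : nat -> Prop) : (forall k, P k) -> freq P.
Proof. by move=> H N; exists N. Qed.

Lemma freq_or (P : nat -> Prop) : freq P \/ freq (fun k => ~ P k).
Proof.
have [h|h] := pselect (freq P); first by left.
right => N; have [h2|h2] := pselect (exists2 k, (N <= k)%N & ~ P k) => //.
exfalso; apply: h => M; have [h3|h3] := pselect (exists2 k, (M <= k)%N & P k) => //.
exfalso; apply: h2; exists (maxn N M); first exact: leq_maxl.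
move=> Pk; apply: h3; exists (maxn N M) => //; exact: leq_maxr.
Qed.

Lemma pigeon n (js : nat -> 'I_n) : exists j, freq (fun k => js k = j).
Proof.
have [h|h] := pselect (exists j, freq (fun k => js k = j)) => //.
have H' : forall j, exists N, forall k, (N <= k)%N -> js k != j.
  move=> j; have [h2|h2] := pselect (exists N, forall k, (N <= k)%N -> js k != j) => //.
  exfalso; apply: h; exists j => N.
  have [h3|h3] := pselect (exists2 k, (N <= k)%N & js k = j) => //.
  exfalso; apply: h2; exists N => k Nk; apply/eqP => E; apply: h3; by exists k.
have [Nf HN] := choice H'.
pose M := (\max_(j < n) Nf j)%N.
exfalso; have := HN (js M) M (leq_bigmax (js M)); by rewrite eqxx.
Qed.

Arguments entry_cvg {R n Dk D}.

Lemma imb_cvg (R : realType) n (Dk : nat -> 'M[R]_n) (D : 'M[R]_n) i :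
  Dk @ \oo --> D -> (fun k => imbalance (Dk k) i) @ \oo --> imbalance D i.
Proof.
move=> H; rewrite /imbalance; apply: cvgB; apply: sum_cvg => j; exact: entry_cvg.
Qed.

Theorem lemma4p1 (R : realType) (n : nat) (E : rel 'I_n) :
  strongly_connected E ->
  forall (D C : 'M[R]_n) (Dk Ck : nat -> 'M[R]_n),
    inAdj E D ->
    (forall k, inAdj E (Dk k)) ->
    (forall k, inAdj E (Ck k)) ->
    Dk @ \oo --> D ->
    Ck @ \oo --> C ->
    (forall k, in_fimcor E (Dk k) (Ck k)) ->
    in_fimcor E D C.
Proof.
move=> _ D C Dk Ck HD HDk HCk cD cC Hf.
have Dge : forall k i j, Dk k i j <= Ck k i j.
  move=> k i j; have [_ /(_ i) [js _ ->]] := Hf k.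
  case: ifPn => // /andP [h _]; lra.
have Ent : forall i j, (0 < D i j) = E i j.
  by move=> i j; have [_ h] := HD i j; apply/idP/idP => /h.
have Entk : forall k i j, (0 < Dk k i j) = E i j.
  by move=> k i j; have [_ h] := HDk k i j; apply/idP/idP => /h.
have EntC : forall k i j, (0 < Ck k i j) = E i j.
  by move=> k i j; have [_ h] := HCk k i j; apply/idP/idP => /h.
split.
  move=> i j; split.
    apply: (freq_le (u := fun=> 0) (cvg_cst (0:R)) (entry_cvg i j cC)).
    by apply: freq_all => k; have [] := HCk k i j.
  split.
    move=> Cp; have [Eij|nE] := boolP (E i j) => //.
    have : C i j = 0.
      apply: esym; apply: (freq_eq (u := fun=> 0) (cvg_cst (0:R)) (entry_cvg i j cC)).
      apply: freq_all => k; have [h _] := HCk k i j.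
      apply/eqP; rewrite eq_le h leNgt EntC nE. done.
    lra.
  move=> Eij; have : D i j <= C i j.
    apply: (freq_le (entry_cvg i j cD) (entry_cvg i j cC)); exact: freq_all.
  by rewrite -Ent in Eij; lra.
move=> i.
have [jsf Hjs] := choice (fun k => let: conj _ h := Hf k in
  let: ex_intro2 js h1 h2 := h i in ex_intro _ js (conj h1 h2)).
have [js Fjs] := pigeon _ jsf.
have cimb := imb_cvg _ _ _ _ i cD.
exists js.
  have [k _ ek] := Fjs 0%N; have [[ni nz _] _] := Hjs k; rewrite -ek.
  split => //.
    have [h _] := HDk k i (jsf k).
    have : 0 < Dk k i (jsf k) by rewrite lt_def nz h.
    by rewrite Entk -Ent ek => /gt_eqF ->.
  move=> k' nk' Dnz.
  have Eik : E i k' by rewrite -Ent lt_def Dnz; have [] := HD i k'.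
  rewrite ek; apply: (freq_le (entry_cvg i js cD) (entry_cvg i k' cD)).
  apply: freq_mono Fjs => m em; have [[_ _ hm] _] := Hjs m; rewrite -em.
  by apply: hm => //; rewrite gt_eqF // Entk.
move=> j.
have [ipos|ineg] := boolP (0 < imbalance D i).
  rewrite /=.
  have [N HN] := ev_ex _ (cvgr_gt _ cimb _ ipos).
  have F2 := freq_ev _ _ Fjs (ex_intro _ N HN).
  have cv : (fun k => if j == js then Dk k i j + imbalance (Dk k) i else Dk k i j) @ \oo -->
            (if j == js then D i j + imbalance D i else D i j).
    case: (j == js); last exact: entry_cvg.
    apply: cvgD => //; exact: entry_cvg.
  apply: (freq_eq (entry_cvg i j cC) cv).
  apply: freq_mono F2 => k [ek pk]; have [_ ->] := Hjs k.
  by rewrite ek pk.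
rewrite /=.
move: ineg; rewrite -leNgt => ineg.
have [Fp|Fn] := freq_or (fun k => (0 < imbalance (Dk k) i) && (j == jsf k)).
  have : 0 <= imbalance D i.
    apply: (freq_le (cvg_cst (0:R)) cimb).
    by apply: freq_mono Fp => k /andP [/ltW].
  move=> i0.
  have : C i j = D i j + imbalance D i.
    apply: (freq_eq (entry_cvg i j cC) (cvgD (entry_cvg i j cD) cimb)).
    apply: freq_mono Fp => k Pk; have [_ ->] := Hjs k; by rewrite Pk.
  lra.
apply: (freq_eq (entry_cvg i j cC) (entry_cvg i j cD)).
apply: freq_mono Fn => k Pk; have [_ ->] := Hjs k.
by move/negP/negbTE: Pk => ->.
Qed.
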